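(* Let $q=2^n$, let $B$ be a $k$-subset of $\mathrm{GF}(q)$ with $k\ge3$, and let $\mathcal B=\mathrm{GA}_1(q)(B)$. Let $E$ be a subset of $\mathrm{GF}(q)$ such that $\hat f_B(\mu)=\hat f_E(\mu^d)$ for all $\mu\in\mathrm{GF}(q)$, where $\gcd(d,q-1)=1$. Then the following are equivalent: (1) $(\mathrm{GF}(q),\mathcal B)$ is a $3$-design; (2) $\sum_{x,y\in\mathrm{GF}(q)}(-1)^{f_E(x)+f_E(y)+f_E(u^dx+(1+u)^dy)}$ is independent of $u\in\mathrm{GF}(q)\setminus\mathrm{GF}(2)$; (3) $\sum_{\alpha\in\mathrm{GF}(q)}\hat f_E(\alpha)\hat f_E(u^d\alpha)\hat f_E((1+u)^d\alpha)$ is independent of $u\in\mathrm{GF}(q)\setminus\mathrm{GF}(2)$; (4) $N_E(u^d,(1+u)^d,1)$ is independent of $u\in\mathrm{GF}(q)\setminus\mathrm{GF}(2)$.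
   Context: $\mathrm{Tr}$ is the absolute trace $\mathrm{GF}(2^n)\to\mathrm{GF}(2)$. For $S\subseteq\mathrm{GF}(q)$, $f_S$ is its characteristic function as a Boolean function, and $\hat f(\mu)=\sum_{x\in\mathrm{GF}(2^n)}(-1)^{f(x)+\mathrm{Tr}(\mu x)}$ is the Walsh transform. $N_S(a,b,c)$ is the number of triples $(x,y,z)\in S^3$ with $ax+by+cz=0$. $\mathrm{GA}_1(q)$ is the group of permutations $x\mapsto ax+b$ of $\mathrm{GF}(q)$ with $a\ne0$; $\mathrm{GA}_1(q)(B)=\{\pi(B):\pi\in\mathrm{GA}_1(q)\}$. A pair $(\mathcal P,\mathcal B)$ with $\mathcal B$ a set of $k$-subsets of $\mathcal P$ is a $3$-design if every $3$-subset of $\mathcal P$ lies in exactly $\lambda$ members of $\mathcal B$ for some constant $\lambda$. *)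

(* Defs.v *)
(* GF(2^n) is modelled as an arbitrary finite field F with #|F| = 2^n. *)
From mathcomp Require Import all_boot all_order all_algebra all_field.
Set Implicit Arguments. Unset Strict Implicit. Unset Printing Implicit Defensive.
Import GRing.Theory.
Local Open Scope ring_scope.

Section Defs.
Variable F : finFieldType.

(* absolute trace GF(2^n) -> GF(2), valued in F (it lies in {0,1}) *)
Definition Tr (n : nat) (x : F) : F := \sum_(i < n) x ^+ (2 ^ i).

Definition chiTr (n : nat) (x : F) : int := if Tr n x == 0 then 1 else -1.

Definition sgnS (S : {set F}) (x : F) : int := if x \in S then -1 else 1.

Definition walsh (n : nat) (S : {set F}) (mu : F) : int :=
  \sum_(x : F) sgnS S x * chiTr n (mu * x).

Definition NS (S : {set F}) (a b c : F) : nat :=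
  #|[set t : F * F * F | [&& t.1.1 \in S, t.1.2 \in S, t.2 \in S &
                           a * t.1.1 + b * t.1.2 + c * t.2 == 0]]|.

Definition GA1orbit (B : {set F}) : {set {set F}} :=
  [set [set p.1 * x + p.2 | x in B] | p in [set p : F * F | p.1 != 0]].

Definition is_3design (Bs : {set {set F}}) : Prop :=
  exists lambda : nat, forall T : {set F}, #|T| = 3%N ->
    #|[set Bl in Bs | T \subset Bl]| = lambda.

Definition indep_u {T : Type} (g : F -> T) : Prop :=
  forall u v : F, u != 0 -> u != 1 -> v != 0 -> v != 1 -> g u = g v.

End Defs.

(* Main.v *)
Require Import Defs.
From mathcomp Require Import all_boot all_order all_algebra all_field.
From mathcomp Require Import ring.
Import GRing.Theory.
Local Open Scope ring_scope.

Section Trace.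
Variable F : finFieldType.
Variable n : nat.
Hypothesis hchar : 2%N \in [pchar F].
Hypothesis hcard : #|F| = (2 ^ n)%N.

Lemma frob2 (x y : F) i : (x + y) ^+ (2 ^ i) = x ^+ (2 ^ i) + y ^+ (2 ^ i).
Proof.
apply: exprDn_pchar; rewrite pnatX; apply/orP; left.
by rewrite /pnat (primes_prime (isT : prime 2)) /= hchar.
Qed.

Lemma TrD (x y : F) : Tr n (x + y) = Tr n x + Tr n y.
Proof. by rewrite /Tr -big_split /=; apply: eq_bigr => i _; rewrite frob2. Qed.

Lemma n_gt0 : (0 < n)%N.
Proof.
case: n hcard => // h0; have : (1 < #|F|)%N.
  by rewrite (cardD1 0) (cardD1 1) !inE oner_neq0.
by rewrite h0.
Qed.

Lemma Tr_sq (x : F) : Tr n x ^+ 2 = Tr n x.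
Proof.
rewrite /Tr.
have -> : (\sum_(i < n) x ^+ (2 ^ i)) ^+ 2 = \sum_(i < n) x ^+ (2 ^ i.+1).
  elim: n => [|m IH]; first by rewrite !big_ord0 expr0n.
  rewrite !big_ord_recr /= -IH.
  rewrite sqrrD.
  have -> : (\sum_(i < m) x ^+ (2 ^ i)) * x ^+ (2 ^ m) *+ 2 = 0.
    by rewrite -mulr_natl (eqP hchar) mul0r.
  by rewrite addr0 -exprM expnS mulnC.
case: n hcard => [|m] hc; first by rewrite !big_ord0.
rewrite big_ord_recr /= -hc expf_card [in RHS]big_ord_recl /= addrC.
by congr (_ + _); apply: eq_bigr => i _.
Qed.

Lemma Tr01 (x : F) : Tr n x = 0 \/ Tr n x = 1.
Proof.
have h := Tr_sq x.
have : Tr n x * (Tr n x - 1) = 0 by rewrite mulrBr mulr1 -expr2 h subrr.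
by move/eqP; rewrite mulf_eq0 subr_eq0 => /orP [] /eqP; [left|right].
Qed.

Lemma chiTrD (x y : F) : chiTr n (x + y) = chiTr n x * chiTr n y.
Proof.
rewrite /chiTr TrD.
case: (Tr01 x) => ->; case: (Tr01 y) => ->; rewrite ?addr0 ?add0r ?eqxx ?oner_eq0 /=.
- by [].
- by rewrite mul1r.
- by rewrite mulr1.
by rewrite -(natrD F 1 1) (eqP hchar) eqxx mulrNN mulr1.
Qed.

Definition TrP : {poly F} := \sum_(i < n) 'X^(2 ^ i).

Lemma TrP_eval x : TrP.[x] = Tr n x.
Proof. by rewrite /TrP horner_sum; apply: eq_bigr => i _; rewrite hornerXn. Qed.

Lemma Tr_nontriv : exists x : F, Tr n x = 1.
Proof.
have n0 := n_gt0.
have : ~ (forall x : F, Tr n x = 0).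
  move=> h.
  have nz : TrP != 0.
    apply/eqP => /(congr1 (fun p : {poly F} => p`_(2 ^ n.-1))).
    rewrite coef0 /TrP coef_sum.
    rewrite (bigD1 (Ordinal (ltac:(by rewrite ltn_predL) : (n.-1 < n)%N))) //= coefXn eqxx big1 ?addr0.
      by move/eqP; rewrite oner_eq0.
    move=> i /eqP hi; rewrite coefXn; case: eqP => // /eqP.
    rewrite eqn_exp2l // => /eqP e; case: hi; apply: val_inj => /=; by rewrite e.
  have sz : (size TrP <= (2 ^ n.-1).+1)%N.
    rewrite /TrP; apply: (big_ind (fun p : {poly F} => (size p <= (2 ^ n.-1).+1)%N)).
    - by rewrite size_poly0.
    - by move=> p q hp hq; apply: leq_trans (size_polyD _ _) _; rewrite geq_max hp hq.
    - move=> i _; rewrite size_polyXn ltnS leq_exp2l //.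
      by rewrite -ltnS prednK.
  have := max_poly_roots nz (rs := enum F).
  rewrite enum_uniq -cardE hcard => /(_ _ isT).
  have -> : all (root TrP) (enum F) by apply/allP => x _; rewrite /root TrP_eval h.
  move=> /(_ isT) lt.
  have := leq_trans lt sz.
  case: n n0 => // m _ /=; rewrite expnS ltnS.
  by rewrite mul2n -addnn -{3}[(2 ^ m)%N]add0n leq_add2r leqn0 expn_eq0.
move=> nh; case: (boolP [exists x : F, Tr n x == 1]).
  by case/existsP => x /eqP; exists x.
rewrite negb_exists => /forallP hn; exfalso; apply: nh => x.
by case: (Tr01 x) => // e; move: (hn x); rewrite e eqxx.
Qed.

Lemma sum_chi0 : \sum_(x : F) chiTr n x = 0.
Proof.
case: Tr_nontriv => b hb.
have e : \sum_(x : F) chiTr n x = - \sum_(x : F) chiTr n x.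
  rewrite {1}(reindex_inj (addIr b)) /= -sumrN; apply: eq_bigr => x _.
  by rewrite chiTrD /chiTr hb oner_eq0 mulrN1.
have : (\sum_(x : F) chiTr n x) *+ 2 == 0 by rewrite mulr2n {1}e addNr.
by rewrite Num.Theory.mulrn_eq0 /= => /eqP.
Qed.

Lemma sum_chi (z : F) : \sum_(a : F) chiTr n (a * z) = ((z == 0) * (2 ^ n))%:R.
Proof.
case: eqP => [->|/eqP nz].
  rewrite mul1n -hcard; under eq_bigr do rewrite mulr0 /chiTr /Tr.
  rewrite sumr_const /=.
  have -> : \sum_(i < n) (0 : F) ^+ (2 ^ i) = 0 by rewrite big1 // => i _; rewrite expr0n expn_eq0.
  by rewrite eqxx cardT -cardE.
by have := sum_chi0; rewrite (reindex_inj (mulIf nz)) /= => ->; rewrite mul0n.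
Qed.

End Trace.


Section Fourier.
Variable F : finFieldType.
Variable n : nat.
Hypothesis hchar : 2%N \in [pchar F].
Hypothesis hcard : #|F| = (2 ^ n)%N.

Lemma fourier3 (S : {set F}) (a b : F) :
  \sum_(al : F) walsh n S al * walsh n S (a * al) * walsh n S (b * al) =
  (2 ^ n)%:R * \sum_(x : F) \sum_(y : F) sgnS S x * sgnS S y * sgnS S (a * x + b * y).
Proof.
have E1 al : walsh n S al * walsh n S (a * al) * walsh n S (b * al) =
   \sum_(z : F) \sum_(x : F) \sum_(y : F)
     (sgnS S z * sgnS S x * sgnS S y) * chiTr n (al * (z + a * x + b * y)).
  rewrite /walsh big_distrlr mulr_suml; apply: eq_bigr => z _.
  rewrite big_distrlr; apply: eq_bigr => x _; apply: eq_bigr => y _.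
  rewrite !mulrDr !(@chiTrD _ _ hchar hcard).
  have -> : al * (a * x) = a * al * x by ring.
  have -> : al * (b * y) = b * al * y by ring.
  rewrite /=.
  ring.
under eq_bigr do rewrite E1.
rewrite exchange_big; under eq_bigr do rewrite exchange_big.
under eq_bigr do under eq_bigr do rewrite exchange_big.
under eq_bigr do under eq_bigr do under eq_bigr do rewrite -mulr_sumr (@sum_chi _ _ hchar hcard).
rewrite exchange_big /= mulr_sumr; apply: eq_bigr => x _.
rewrite exchange_big /= mulr_sumr; apply: eq_bigr => y _.
rewrite (bigD1 (a * x + b * y)) //= big1 ?addr0.
  have h0 : a * x + b * y + a * x + b * y = 0.
    by rewrite -[RHS](addrr_pchar2 hchar (a * x + b * y)); ring.
  rewrite h0 eqxx mul1n; ring.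
move=> z hz; rewrite -mulr_natl.
have -> : (z + a * x + b * y == 0) = false.
  apply/negbTE; apply: contra hz.
  by rewrite -addrA addr_eq0 (oppr_pchar2 hchar).
by rewrite mul0n mulr0.
Qed.

End Fourier.


Section Count.
Variable F : finFieldType.
Hypothesis hchar : 2%N \in [pchar F].

Definition ind (S : {set F}) (x : F) : int := (x \in S)%:R.

Lemma sgnSE S x : sgnS S x = 1 - 2 * ind S x.
Proof. by rewrite /sgnS /ind; case: (x \in S) => /=; rewrite ?mulr1 ?mulr0 ?subr0 //; ring. Qed.

Lemma sum_ind_inj S (f : F -> F) : injective f -> \sum_(x : F) ind S (f x) = #|S|%:R.
Proof.
move=> fi.
have -> : \sum_(x : F) ind S (f x) = \sum_(x : F) ind S x by rewrite [RHS](reindex_inj fi).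
rewrite /ind.
rewrite -sumr_const [RHS]big_mkcond /=; apply: eq_bigr => x _; by case: (x \in S).
Qed.

Lemma sum_ind S : \sum_(x : F) ind S x = #|S|%:R.
Proof. exact: (@sum_ind_inj S id). Qed.

Lemma sum_ind_aff S (a c : F) : a != 0 -> \sum_(x : F) ind S (c + a * x) = #|S|%:R.
Proof.
move=> a0; apply: (@sum_ind_inj S (fun x => c + a * x)) => x y /= /addrI.
exact: mulfI.
Qed.

Lemma sum_ind_aff' S (a c : F) : a != 0 -> \sum_(x : F) ind S (a * x + c) = #|S|%:R.
Proof.
by move=> a0; rewrite -(@sum_ind_aff S a c a0); apply: eq_bigr => x _; rewrite addrC.
Qed.

Definition Qs (S : {set F}) (a b : F) : int :=
  \sum_(x : F) \sum_(y : F) ind S x * ind S y * ind S (a * x + b * y).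

Lemma sum3 (G : F * F * F -> int) :
  \sum_(t : F * F * F) G t = \sum_(x : F) \sum_(y : F) \sum_(z : F) G ((x, y), z).
Proof.
rewrite (pair_bigA _ (fun x y => \sum_(z : F) G ((x, y), z))) /=.
rewrite (pair_bigA _ (fun p z => G ((p.1, p.2), z))) /=.
by apply: eq_bigr => [[[x y] z]].
Qed.

Lemma NS_Qs S a b : (NS S a b 1)%:R = Qs S a b.
Proof.
rewrite /NS -sum1_card natr_sum big_mkcond /= sum3.
apply: eq_bigr => x _; apply: eq_bigr => y _.
rewrite (bigD1 (a * x + b * y)) //= big1 ?addr0.
  rewrite inE /= mul1r (addrr_pchar2 hchar) eqxx andbT /ind.
  by case: (x \in S); case: (y \in S); case: (_ \in S); rewrite /= ?mulr1 ?mulr0 ?mul0r.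
move=> z hz; rewrite inE /= mul1r.
suff -> : (a * x + b * y + z == 0) = false by rewrite !andbF.
apply/negbTE; apply: contra hz; rewrite addr_eq0 (oppr_pchar2 hchar) => /eqP ->.
by [].
Qed.

Lemma expandP S a b : a != 0 -> b != 0 ->
  \sum_(x : F) \sum_(y : F) sgnS S x * sgnS S y * sgnS S (a * x + b * y) =
  (#|F|%:R - 2 * #|S|%:R) ^+ 2 - 2 * #|F|%:R * #|S|%:R + 8 * #|S|%:R ^+ 2 - 8 * Qs S a b.
Proof.
move=> a0 b0.
set k : int := #|S|%:R; set q : int := #|F|%:R.
have pw x y : sgnS S x * sgnS S y * sgnS S (a * x + b * y) =
   (1 - 2 * ind S x) * (1 - 2 * ind S y) - 2 * ind S (a * x + b * y)
   + 4 * (ind S x * ind S (a * x + b * y)) + 4 * (ind S y * ind S (a * x + b * y))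
   - 8 * (ind S x * ind S y * ind S (a * x + b * y)).
  rewrite !sgnSE; ring.
under eq_bigr do under eq_bigr do rewrite pw.
under eq_bigr do rewrite sumrB !big_split /=.
rewrite sumrB !big_split /=.
have s0 : \sum_(x : F) (1 - 2 * ind S x) = q - 2 * k.
  by rewrite sumrB -mulr_sumr sum_ind sumr_const cardT -cardE.
have -> : \sum_(x : F) \sum_(y : F) (1 - 2 * ind S x) * (1 - 2 * ind S y) = (q - 2 * k) ^+ 2.
  by rewrite -big_distrlr /= s0 expr2.
have -> : \sum_(x : F) \sum_(y : F) - (2 * ind S (a * x + b * y)) = - (2 * q * k).
  under eq_bigr do rewrite sumrN -mulr_sumr sum_ind_aff //.
  by rewrite sumrN sumr_const cardT -cardE /q; rewrite -mulr_natl; ring.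
have -> : \sum_(x : F) \sum_(y : F) 4 * (ind S x * ind S (a * x + b * y)) = 4 * k ^+ 2.
  under eq_bigr do rewrite -mulr_sumr -mulr_sumr sum_ind_aff //.
  by rewrite -mulr_sumr -mulr_suml sum_ind; ring.
have -> : \sum_(x : F) \sum_(y : F) 4 * (ind S y * ind S (a * x + b * y)) = 4 * k ^+ 2.
  rewrite exchange_big /=.
  under eq_bigr do rewrite -mulr_sumr -mulr_sumr sum_ind_aff' //.
  by rewrite -mulr_sumr -mulr_suml sum_ind; ring.
rewrite /Qs mulr_sumr; under [X in _ = _ - X]eq_bigr do rewrite mulr_sumr.
rewrite /k; ring.
Qed.

End Count.


Lemma card_sub (T : finType) (A : {set T}) (P : pred T) :
  #|[set i in A | P i]| = (\sum_(i in A) (P i : nat))%N.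
Proof.
rewrite -sum1_card (eq_bigl (fun i => (i \in A) && P i)); last by move=> i; rewrite inE.
by rewrite big_mkcondr /=; apply: eq_bigr => i _; case: (P i).
Qed.

Lemma card3 (T : finType) (x y z : T) : x != y -> y != z -> z != x -> #|[set x; y; z]| = 3%N.
Proof.
move=> xy yz zx; rewrite setUC cardsU1 cardsU1 cards1 !inE.
by rewrite (negbTE zx) eq_sym (negbTE yz) xy.
Qed.

Ltac fsolve := field; try (by repeat (apply/andP; split) => //).

Section Design.
Variable F : finFieldType.
Hypothesis hchar : 2%N \in [pchar F].
Variable B : {set F}.

Definition Phi (p : F * F) : {set F} := [set p.1 * x + p.2 | x in B].
Definition Gs : {set F * F} := [set p : F * F | p.1 != 0].
Definition stab := #|[set p in Gs | Phi p == B]|.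

Lemma orbitE : GA1orbit B = [set Phi p | p in Gs].
Proof. by []. Qed.

Lemma fiber p0 : p0 \in Gs -> #|[set p in Gs | Phi p == Phi p0]| = stab.
Proof.
rewrite inE => a0.
pose h (p : F * F) := (p0.1 * p.1, p0.1 * p.2 + p0.2).
have hi : injective h.
  move=> [a b] [c e] [] /(mulfI a0) -> /addIr /(mulfI a0) -> //.
pose tau (x : F) := p0.1 * x + p0.2.
have ti : injective tau by move=> x y /addIr /(mulfI a0).
rewrite /stab -(card_preimset _ hi); apply: eq_card => p; rewrite !inE /=.
rewrite mulf_eq0 negb_or a0 /=; congr (_ && _).
have -> : Phi (h p) = [set tau x | x in Phi p].
  rewrite /Phi -imset_comp; apply: eq_imset => x /=; rewrite /tau /=; ring.
have -> : Phi p0 = [set tau x | x in B] by [].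
exact: (inj_eq (imset_inj ti)).
Qed.

Lemma stab_gt0 : (0 < stab)%N.
Proof.
rewrite /stab card_gt0; apply/set0Pn; exists (1, 0); rewrite !inE /= oner_neq0 /=.
apply/eqP; rewrite /Phi /= -[RHS]imset_id; apply: eq_imset => x; ring.
Qed.

Lemma count_blocks (T : {set F}) :
  #|[set p in Gs | T \subset Phi p]| = (stab * #|[set Bl in GA1orbit B | T \subset Bl]|)%N.
Proof.
rewrite !card_sub orbitE (partition_big_imset Phi) /= big_distrr /=.
apply: eq_bigr => Bl /imsetP [p0 p0G ->].
rewrite (eq_bigr (fun _ => (T \subset Phi p0) : nat)); last by move=> p /andP [_ /eqP ->].
rewrite -(@fiber p0 p0G).
rewrite (eq_bigl (mem [set p in Gs | Phi p == Phi p0])); last by move=> p; rewrite !inE.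
by rewrite sum_nat_const.
Qed.

Definition Rset (c : F) : {set F * F} :=
  [set xy : F * F | [&& xy.1 \in B, xy.2 \in B, xy.1 != xy.2 & xy.1 + c * (xy.2 - xy.1) \in B]].

Lemma mem_Phi p t : p.1 != 0 -> (t \in Phi p) = ((t - p.2) / p.1 \in B).
Proof.
move=> a0; apply/imsetP/idP => [[x xB ->]|h].
  by have -> : (p.1 * x + p.2 - p.2) / p.1 = x by field.
by exists ((t - p.2) / p.1) => //; field.
Qed.

Lemma count_T t1 t2 t3 : t1 != t2 -> t2 != t3 -> t3 != t1 ->
  #|[set p in Gs | [set t1; t2; t3] \subset Phi p]| = #|Rset ((t3 - t1) / (t2 - t1))|.
Proof.
move=> h12 h23 h31.
have d21 : t2 - t1 != 0 by rewrite subr_eq0 eq_sym.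
set c := (t3 - t1) / (t2 - t1).
pose f (p : F * F) := ((t1 - p.2) / p.1, (t2 - p.2) / p.1).
pose g (xy : F * F) := ((t2 - t1) / (xy.2 - xy.1), t1 - (t2 - t1) / (xy.2 - xy.1) * xy.1).
have gR : forall xy, xy \in Rset c -> g xy \in [set p in Gs | [set t1; t2; t3] \subset Phi p]
                                     /\ f (g xy) = xy.
  move=> [x y]; rewrite !inE /= => /and4P [xB yB xy zB].
  have dyx : y - x != 0 by rewrite subr_eq0 eq_sym.
  have a0 : (t2 - t1) / (y - x) != 0 by rewrite mulf_neq0 ?invr_eq0.
  split; last by rewrite /f /g /=; apply: injective_projections => /=; fsolve.
  rewrite a0 /= !subUset !sub1set !mem_Phi //=.
  have -> : (t1 - (t1 - (t2 - t1) / (y - x) * x)) / ((t2 - t1) / (y - x)) = x by fsolve.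
  have -> : (t2 - (t1 - (t2 - t1) / (y - x) * x)) / ((t2 - t1) / (y - x)) = y by fsolve.
  have -> : (t3 - (t1 - (t2 - t1) / (y - x) * x)) / ((t2 - t1) / (y - x)) = x + c * (y - x).
    by rewrite /c; fsolve.
  by rewrite xB yB zB.
have fR : forall p, p \in [set p in Gs | [set t1; t2; t3] \subset Phi p] ->
                    f p \in Rset c /\ g (f p) = p.
  move=> [a b]; rewrite !inE /= !subUset !sub1set => /andP [a0 /andP [/andP [h1 h2] h3]].
  move: h1 h2 h3; rewrite !mem_Phi //= => h1 h2 h3.
  have ed : (t2 - b) / a - (t1 - b) / a = (t2 - t1) / a by fsolve.
  have d : (t2 - b) / a - (t1 - b) / a != 0 by rewrite ed mulf_neq0 ?invr_eq0.
  split; last by rewrite /f /g /= ed; apply: injective_projections => /=; fsolve.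
  rewrite /f /= h1 h2 /=; apply/andP; split.
    by move: d; apply: contra => /eqP ->; rewrite subrr.
  have -> : (t1 - b) / a + c * ((t2 - b) / a - (t1 - b) / a) = (t3 - b) / a by rewrite /c; fsolve.
  exact: h3.
have -> : [set p in Gs | [set t1; t2; t3] \subset Phi p] = [set g xy | xy in Rset c].
  apply/setP => p; apply/idP/imsetP => [hp|[xy hxy ->]]; last by case: (gR _ hxy).
  by case: (fR _ hp) => h1 h2; exists (f p).
rewrite card_in_imset // => xy1 xy2 h1 h2 e.
by case: (gR _ h1) => _ <-; case: (gR _ h2) => _ <-; rewrite e.
Qed.


Lemma sum2 (G : F * F -> int) :
  \sum_(t : F * F) G t = \sum_(x : F) \sum_(y : F) G (x, y).
Proof. by rewrite (pair_bigA _ (fun x y => G (x, y))) /=; apply: eq_bigr => [[x y]]. Qed.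

Lemma R_Q c : (#|Rset c|%:R + #|B|%:R : int) = Qs _ B (1 - c) c.
Proof.
rewrite -sum1_card natr_sum big_mkcond /=.
rewrite sum2.
rewrite -(sum_ind _ B) -big_split /=; apply: eq_bigr => x _.
rewrite (bigD1 x) //= [RHS](bigD1 x) //= inE /= eqxx /= !andbF add0r addrC.
have -> : (1 - c) * x + c * x = x by ring.
congr (_ + _).
  by rewrite /ind; case: (x \in B).
apply: eq_bigr => y yx; rewrite inE /= eq_sym yx /ind /=.
have -> : (1 - c) * x + c * y = x + c * (y - x) by ring.
by case: (x \in B); case: (y \in B); case: (_ \in B).
Qed.

Lemma three_elems (T : {set F}) : #|T| = 3%N ->
  exists t1 t2 t3, [/\ t1 != t2, t2 != t3, t3 != t1 & T = [set t1; t2; t3]].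
Proof.
move=> h3; have : (2 < #|T|)%N by rewrite h3.
case/card_gt2P => x [y [z [[xT yT zT] [xy yz zx]]]].
exists x, y, z; split => //; apply/esym/eqP; rewrite eqEcard h3 card3 // leqnn andbT.
by rewrite !subUset !sub1set xT yT zT.
Qed.

Lemma design_iff : (3 <= #|B|)%N ->
  is_3design (GA1orbit B) <-> indep_u (fun c : F => #|Rset c|).
Proof.
move=> hB; split.
  case=> lam hl u v u0 u1 v0 v1.
  have key w : w != 0 -> w != 1 -> #|Rset w| = (stab * lam)%N.
    move=> w0 w1.
    have h01 : (0 : F) != 1 by rewrite eq_sym oner_neq0.
    have h1w : 1 != w by rewrite eq_sym.
    have e := count_T _ _ _ h01 h1w w0.
    rewrite !subr0 divr1 in e.
    by rewrite -e count_blocks hl // card3.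
  by rewrite !key.
move=> hind.
have [c0 [c00 c01]] : exists c0 : F, c0 != 0 /\ c0 != 1.
  have : (2 < #|F|)%N by apply: leq_trans hB (max_card _).
  case/card_gt2P => x [y [z [_ [xy yz zx]]]].
  case: (eqVneq x 0) => [x0|x0]; last case: (eqVneq x 1) => [x1|x1].
  - case: (eqVneq y 1) => [y1|y1].
      by exists z; split; [rewrite -x0 | rewrite -y1]; rewrite // eq_sym.
    by exists y; split => //; rewrite -x0 eq_sym.
  - case: (eqVneq y 0) => [y0|y0].
      by exists z; split; [rewrite -y0 | rewrite -x1]; rewrite // eq_sym.
    by exists y; split => //; rewrite -x1 eq_sym.
  - by exists x.
exists (#|Rset c0| %/ stab)%N => T /three_elems [t1 [t2 [t3 [h12 h23 h31 ->]]]].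
have := count_T _ _ _ h12 h23 h31; rewrite count_blocks => e.
have d21 : t2 - t1 != 0 by rewrite subr_eq0 eq_sym.
have c0' : (t3 - t1) / (t2 - t1) != 0 by rewrite mulf_neq0 ?invr_eq0 // subr_eq0.
have c1' : (t3 - t1) / (t2 - t1) != 1.
  apply: contra h23 => /eqP h; apply/eqP.
  have : t3 - t1 = t2 - t1 by rewrite -[t3 - t1](divfK d21) h mul1r.
  by move/addIr.
have E2 : #|Rset c0| = (stab * #|[set Bl in GA1orbit B | [set t1; t2; t3] \subset Bl]|)%N.
  exact: etrans (esym (hind _ _ c0' c1' c00 c01)) (esym e).
by rewrite E2 mulKn ?stab_gt0.
Qed.


End Design.


Lemma indep_inj {F : finFieldType} (T1 T2 : Type) (g1 : F -> T1) (g2 : F -> T2) (h : T2 -> T1) :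
  injective h -> (forall u, u != 0 -> u != 1 -> g1 u = h (g2 u)) ->
  indep_u g1 <-> indep_u g2.
Proof.
move=> hi e; split => H u v u0 u1 v0 v1.
  by apply: hi; rewrite -!e //; apply: H.
by rewrite !e // (H u v).
Qed.

Lemma pow_id (F : finFieldType) (x : F) a : x ^+ (1 + a * #|F|.-1) = x.
Proof.
elim: a => [|a IH]; first by rewrite mul0n addn0 expr1.
rewrite mulSn addnCA exprD IH -exprSr prednK ?expf_card //.
by apply/card_gt0P; exists 0.
Qed.

Lemma pow_inj {F : finFieldType} d : (0 < d)%N -> coprime d #|F|.-1 ->
  injective (fun x : F => x ^+ d).
Proof.
move=> d0 cop.
case: (Bezoutl #|F|.-1 d0) => a _; rewrite (eqP cop) => /dvdnP [e he].
move=> x y /= exy.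
by rewrite -(pow_id _ x a) -(pow_id _ y a) he mulnC !exprM exy.
Qed.

Lemma Qs_swap (F : finFieldType) (S : {set F}) a b : Qs _ S a b = Qs _ S b a.
Proof.
rewrite /Qs exchange_big; apply: eq_bigr => x _; apply: eq_bigr => y _.
by rewrite addrC (mulrC (ind F S y)).
Qed.

Theorem theorem8 (n : nat) (F : finFieldType) (hchar : 2%N \in [pchar F])
  (hcard : #|F| = (2 ^ n)%N) (k : nat) (B E : {set F}) (d : nat)
  (hB : #|B| = k) (hk : (3 <= k)%N)
  (hd : coprime d (2 ^ n).-1)
  (hWE : forall mu : F, walsh n B mu = walsh n E (mu ^+ d)) :
  [<-> is_3design (GA1orbit B);
       indep_u (fun u : F => \sum_(x : F) \sum_(y : F)
                  sgnS E x * sgnS E y * sgnS E (u ^+ d * x + (1 + u) ^+ d * y));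
       indep_u (fun u : F => \sum_(alpha : F)
                  walsh n E alpha * walsh n E (u ^+ d * alpha)
                    * walsh n E ((1 + u) ^+ d * alpha));
       indep_u (fun u : F => NS E (u ^+ d) ((1 + u) ^+ d) 1)].
Proof.
rewrite -hcard in hd.
have f0 : (0 < #|F|)%N by apply/card_gt0P; exists 0.
have d0 : (0 < d)%N.
  case: d hd hWE => // + _; rewrite /coprime gcd0n => /eqP h1.
  have : (#|B| <= #|F|)%N by apply: max_card.
  have -> : #|F| = 2%N by rewrite -(prednK f0) h1.
  by rewrite hB => /(leq_trans hk).
have pinj := @pow_inj F d d0 hd.
set q : int := #|F|%:R.
have q0 : q != 0 by rewrite /q Num.Theory.pnatr_eq0 -lt0n.
have u1 (u : F) : (1 + u == 0) = (u == 1).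
  by rewrite addrC addr_eq0 (oppr_pchar2 hchar).
pose PB (u : F) := \sum_(x : F) \sum_(y : F) sgnS B x * sgnS B y * sgnS B (u * x + (1 + u) * y).
pose PE (u : F) := \sum_(x : F) \sum_(y : F)
                  sgnS E x * sgnS E y * sgnS E (u ^+ d * x + (1 + u) ^+ d * y).
pose GE (u : F) := \sum_(alpha : F) walsh n E alpha * walsh n E (u ^+ d * alpha)
                    * walsh n E ((1 + u) ^+ d * alpha).
have GEq u : GE u = q * PB u.
  rewrite /GE (reindex_inj pinj) /=.
  under eq_bigr do rewrite -!exprMn -!hWE.
  by rewrite (fourier3 _ _ hchar hcard) /q hcard.
have PEq u : PE u = PB u.
  by apply: (mulfI q0); rewrite -GEq /GE /PE (fourier3 _ _ hchar hcard) /q hcard.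
have e1 : indep_u PE <-> indep_u PB.
  by apply: (@indep_inj _ _ _ PE PB id) => // w _ _; rewrite PEq.
have e2 : indep_u GE <-> indep_u PB.
  by apply: (@indep_inj _ _ _ GE PB (fun z => q * z)) => [|w _ _]; [exact: mulfI | rewrite GEq].
have e3 : indep_u (fun u : F => NS E (u ^+ d) ((1 + u) ^+ d) 1) <-> indep_u PB.
  apply: iff_sym; apply: (@indep_inj _ _ _ PB _
     (fun m : nat => (#|F|%:R - 2 * #|E|%:R) ^+ 2 - 2 * #|F|%:R * #|E|%:R + 8 * #|E|%:R ^+ 2
                       - 8 * (m%:R : int))).
    move=> m1 m2 /= /addrI /eqP; rewrite eqr_opp => /eqP /(mulfI (_ : (8 : int) != 0)).
    by move=> /(_ isT) /eqP; rewrite Num.Theory.eqr_nat => /eqP.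
  move=> w w0 w1; rewrite -PEq /PE expandP //.
  - by rewrite (NS_Qs _ hchar).
  - by rewrite expf_neq0.
  - by rewrite expf_neq0 // u1.
have e0 : is_3design (GA1orbit B) <-> indep_u PB.
  have hB3 : (3 <= #|B|)%N by rewrite hB.
  apply: iff_trans (@design_iff F B hB3) _.
  apply: iff_sym; apply: (@indep_inj _ _ _ PB (fun c => #|Rset _ B c|)
     (fun m : nat => ((#|F|%:R - 2 * #|B|%:R) ^+ 2 - 2 * #|F|%:R * #|B|%:R + 8 * #|B|%:R ^+ 2
                       - 8 * ((m%:R : int) + #|B|%:R)) : int)).
    move=> m1 m2 /= /addrI /eqP; rewrite eqr_opp => /eqP /(mulfI (_ : (8 : int) != 0)).
    by move=> /(_ isT) /addIr /eqP; rewrite Num.Theory.eqr_nat => /eqP.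
  move=> w w0 w1; by rewrite /PB expandP ?u1 // (R_Q _ B w) (_ : 1 - w = 1 + w) ?(oppr_pchar2 hchar) // [Qs _ _ (1 + w) w]Qs_swap.
tfae.
- by move/e0/e1.
- by move/e1/e2.
- by move/e2/e3.
- by move/e3/e0.
Qed.
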